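(* Let $G$ be a torsion-free locally compact abelian group such that $G_{op}=G$, and let $G^{*}$ be its minimal divisible extension. Then $G^{*}_{op}=G^{*}$.
   Context: A subgroup $H$ of an abelian group $G$ is pure if $nH=H\cap nG$ for every positive integer $n$. For an LCA group $G$, $G_{op}$ denotes the intersection of all open pure subgroups of $G$. For an LCA group $G$, $G^{*}$ denotes the minimal divisible extension (divisible hull) of $G$, topologized as an LCA group containing $G$ as an open subgroup (as in Hewitt–Ross 4.18.h). *)

(* Defs.v *)
From HB Require Import structures.
From mathcomp Require Import all_boot all_order all_algebra.
From mathcomp Require Import all_classical all_reals all_analysis.
Set Implicit Arguments. Unset Strict Implicit. Unset Printing Implicit Defensive.
Import Order.TTheory GRing.Theory Num.Theory.
Local Open Scope classical_set_scope.
Local Open Scope ring_scope.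

Definition is_subgroup (G : zmodType) (H : set G) : Prop :=
  H 0 /\ (forall x y, H x -> H y -> H (x - y)).

Definition nmul (G : zmodType) (n : nat) (A : set G) : set G :=
  [set x *+ n | x in A].

Definition pure (G : zmodType) (H : set G) : Prop :=
  forall n : nat, (0 < n)%N -> nmul n H = H `&` nmul n setT.

Definition G_op (G : topologicalZmodType) : set G :=
  \bigcap_(H in [set H : set G | is_subgroup H /\ open H /\ pure H]) H.

Definition LCA (G : topologicalZmodType) : Prop :=
  hausdorff_space G /\ locally_compact [set: G].

Definition torsion_free (G : zmodType) : Prop :=
  forall (x : G) (n : nat), (0 < n)%N -> x *+ n = 0 -> x = 0.

Definition divisible_set (G : zmodType) (D : set G) : Prop :=
  forall x n, (0 < n)%N -> D x -> exists2 y, D y & y *+ n = x.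

Definition divisible (G : zmodType) : Prop := divisible_set [set: G].

(* f : G -> Gs exhibits the LCA group Gs as the minimal divisible extension G^*
   of G, topologized so that G is an open (topological) subgroup of Gs:
   - f is an injective group homomorphism,
   - f is a homeomorphism of G onto the open subgroup f(G) of Gs
     (continuous, and maps open sets to open sets),
   - Gs is divisible, and no proper divisible subgroup of Gs contains f(G). *)
Definition minimal_divisible_extension (G Gs : topologicalZmodType)
    (f : G -> Gs) : Prop :=
  (forall x y, f (x - y) = f x - f y) /\
  injective f /\
  continuous f /\
  (forall U : set G, open U -> open (f @` U)) /\
  divisible Gs /\
  (forall D : set Gs, is_subgroup D -> divisible_set D ->
         f @` setT `<=` D -> D = setT).

(* Main.v *)
Require Import Defs.
From HB Require Import structures.
From mathcomp Require Import all_boot all_order all_algebra.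
From mathcomp Require Import all_classical all_reals all_analysis.
Import Order.TTheory GRing.Theory Num.Theory.
Local Open Scope classical_set_scope.
Local Open Scope ring_scope.

Section Alg.
Variable V : zmodType.
Implicit Types (D : set V).

Definition dcl D := forall x y, D x -> D y -> D (x - y).

Lemma dcl0 D x : dcl D -> D x -> D 0.
Proof. by move=> h Dx; rewrite -(subrr x); apply: h. Qed.

Lemma dclN D x : dcl D -> D x -> D (- x).
Proof. by move=> h Dx; have := h 0 x (dcl0 _ _ h Dx) Dx; rewrite sub0r. Qed.

Lemma dclD D x y : dcl D -> D x -> D y -> D (x + y).
Proof. by move=> h Dx Dy; have := h x (- y) Dx (dclN _ _ h Dy); rewrite opprK. Qed.

Lemma dclMn D x n : dcl D -> D x -> D (x *+ n).
Proof.
move=> h Dx; elim: n => [|n IH]; first by rewrite mulr0n; apply: dcl0 Dx.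
by rewrite mulrS; apply: dclD.
Qed.

Lemma dclMz D x k : dcl D -> D x -> D (x *~ k).
Proof.
move=> h Dx; case: k => n; first by apply: dclMn.
by rewrite NegzE mulrNz; apply: dclN => //; apply: dclMn.
Qed.

Lemma mulrzn (x : V) (u : int) (n : nat) : x *~ (u * n%:Z) = (x *+ n) *~ u.
Proof. by rewrite mulrC mulrzA -pmulrn. Qed.

End Alg.
Arguments dcl {V} D.
Arguments dcl0 {V D x}.
Arguments dclN {V D x}.
Arguments dclD {V D x y}.
Arguments dclMn {V D x} n.
Arguments dclMz {V D x} k.
Arguments mulrzn {V}.

Section Key.
Variable V : zmodType.

Lemma key (A : set V) (p : nat) (s : V) : is_subgroup A -> divisible V ->
  prime p -> s *+ p = 0 -> ~ A s ->
  (forall D : set V, is_subgroup D -> divisible_set D -> A `<=` D -> D = setT) ->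
  False.
Proof.
move=> [A0 Ad] divV pp sp nAs Hmin.
pose P := fun M : set V => (M = set0 \/ A `<=` M) /\ @dcl V M /\ ~ M s.
have [M [[PM1 [dM nMs]] Mmax]] : exists M, P M /\ forall B, M `<` B -> ~ P B.
  apply: Zorn_bigcup => F FP Ftot; split; last split.
  - case: (pselect (exists X, F X /\ A `<=` X)) => [[X [FX AX]]|nX].
      by right => a Aa; exists X => //; exact: AX.
    left; apply/seteqP; split => // x [X FX Xx]; exfalso.
    have [X0|AX] := (FP X FX).1; first by rewrite X0 in Xx.
    by apply: nX; exists X.
  - move=> x y [X FX Xx] [Y FY Yy].
    have [XY|YX] := Ftot X Y FX FY.
      by exists Y => //; apply: (FP Y FY).2.1 => //; exact: XY.
    by exists X => //; apply: (FP X FX).2.1 => //; exact: YX.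
  - by move=> [X FX Xs]; exact: (FP X FX).2.2 Xs.
have AM : A `<=` M.
  case: PM1 => [M0|//]; exfalso; apply: (Mmax A).
    split; first by rewrite M0.
    by move=> /(_ 0 A0); rewrite M0.
  by split; [right|split].
have M0 : M 0 by apply: AM.
have ext : forall z, ~ M z -> exists m k, M m /\ s = m + z *~ k.
  move=> z nz; apply: contrapT => hne.
  pose N := [set y | exists m k, M m /\ y = m + z *~ k].
  apply: (Mmax N).
    split; first by move=> y My; exists y, 0; rewrite mulr0z addr0.
    by move=> h; apply: nz; apply: h; exists 0, 1; rewrite mulr1z add0r.
  split; first by right => a /AM Ma; exists a, 0; rewrite mulr0z addr0.
  split; last by move=> [m [k [Mm sE]]]; apply: hne; exists m, k.
  move=> _ _ [m1 [k1 [M1 ->]]] [m2 [k2 [M2 ->]]].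
  exists (m1 - m2), (k1 - k2); split; first exact: dM.
  by rewrite mulrzBr opprD addrACA.
have divq : forall q x, prime q -> M x -> exists2 w, M w & w *+ q = x.
  move=> q x pq Mx.
  have [z _ zx] := divV x q (prime_gt0 pq) I.
  case: (pselect (M z)) => Mz; first by exists z.
  have [m [k [Mm sE]]] := ext z Mz.
  have zk : (z *~ k) *+ q = x *~ k by rewrite pmulrn -mulrzA mulrzn zx.
  have Msq : M (s *+ q).
    by rewrite sE mulrnDl zk; apply: dclD => //; [apply: dclMn|apply: dclMz].
  case: (eqVneq q p) => [eqp|qp].
  - subst q.
    case: (boolP (p %| `|k|)%N) => pk.
      have /dvdzP [k' kE] : (p%:Z %| k)%Z by rewrite dvdzE.
      exfalso; apply: nMs; rewrite sE kE mulrzn zx.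
      by apply: dclD => //; apply: dclMz.
    have : coprimez k p.
      by rewrite /coprimez /gcdz /= gcdnC; move: pk; rewrite -prime_coprime.
    move=> /coprimezP [[u v] /= e].
    exists (z - s *~ u).
      have -> : z - s *~ u = x *~ v - m *~ u.
        rewrite -{1}(mulr1z z) -e mulrzDr mulrzn zx sE mulrzDl.
        by rewrite (mulrC u) mulrzA opprD (addrC (- (m *~ u))) addrA (addrAC (z *~ k *~ u)) subrr add0r.
      exact: (dM _ _ (dclMz _ dM Mx) (dclMz _ dM Mm)).
    by rewrite mulrnBl zx pmulrn -mulrzA mulrzn sp mul0rz subr0.
  - exfalso; apply: nMs.
    have : coprimez p q.
      have : coprime p q by rewrite prime_coprime // dvdn_prime2 // eq_sym.
      by [].
    move=> /coprimezP [[u v] /= e].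
    rewrite -(mulr1z s) -e mulrzDr !mulrzn sp mul0rz add0r.
    exact: (dclMz _ dM Msq).
have divn : forall n x, (0 < n)%N -> M x -> exists2 w, M w & w *+ n = x.
  elim/ltn_ind => n IH x n0 Mx.
  case: (ltnP 1 n) => n1; last first.
    by exists x => //; have -> : n = 1%N by apply/eqP; rewrite eqn_leq n1.
  have pn := pdiv_prime n1.
  have [y My xy] := divq _ x pn Mx.
  have [|||w Mw wy] := IH (n %/ pdiv n)%N _ y.
  - by apply: ltn_Pdiv => //; exact: prime_gt1.
  - by rewrite divn_gt0 ?prime_gt0 // dvdn_leq // pdiv_dvd.
  - exact: My.
  by exists w => //; rewrite -xy -wy -mulrnA divnK // pdiv_dvd.
apply: nMs.
have -> : M = setT.
  apply: Hmin; [exact: (conj M0 dM) | | exact: AM].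
  by move=> x n n0 Mx; apply: divn.
by [].
Qed.
End Key.

Theorem corollary10 (G Gs : topologicalZmodType) (f : G -> Gs) :
  @LCA G -> @torsion_free G -> @G_op G = [set: G] ->
  @LCA Gs -> minimal_divisible_extension f ->
  @G_op Gs = [set: Gs].
Proof.
move=> _ tfG HG _ [fB [finj [fc [_ [divGs Hmin]]]]].
have f0 : f 0 = 0 by have := fB 0 0; rewrite !subrr.
have fN : forall x, f (- x) = - f x.
  by move=> x; have := fB 0 x; rewrite f0 !sub0r.
have fD : forall x y, f (x + y) = f x + f y.
  by move=> x y; have := fB x (- y); rewrite opprK fN opprK.
have fMn : forall x n, f (x *+ n) = f x *+ n.
  move=> x; elim=> [|n IH]; first by rewrite !mulr0n f0.
  by rewrite !mulrS fD IH.
pose A := f @` [set: G].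
have Asub : is_subgroup A.
  split; first by exists 0.
  by move=> _ _ [a _ <-] [b _ <-]; exists (a - b) => //; rewrite fB.
have noprime : forall (s : Gs) p, prime p -> s *+ p = 0 -> s = 0.
  move=> s p pp sp; apply: contrapT => ns.
  apply: (@key _ _ _ _ Asub divGs pp sp _ Hmin) => -[g _ gs].
  have gp : g *+ p = 0 by apply: finj; rewrite fMn gs sp f0.
  by apply: ns; rewrite -gs (tfG g p (prime_gt0 pp) gp) f0.
have tfGs : forall (s : Gs) n, (0 < n)%N -> s *+ n = 0 -> s = 0.
  move=> s n; elim/ltn_ind: n s => n IH s n0 sn.
  case: (ltnP 1 n) => n1; last first.
    by move: sn; have -> : n = 1%N by apply/eqP; rewrite eqn_leq n1.
  have pn := pdiv_prime n1.
  have ss : (s *+ (n %/ pdiv n)) *+ pdiv n = 0 by rewrite -mulrnA divnK // pdiv_dvd.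
  apply: (IH (n %/ pdiv n)%N _ s).
  - by apply: ltn_Pdiv => //; exact: prime_gt1.
  - by rewrite divn_gt0 ?prime_gt0 // dvdn_leq // pdiv_dvd.
  - exact: noprime ss.
apply/seteqP; split => // x _ H [Hsub [Hop Hpure]].
have Hd : dcl H by case: Hsub.
suff -> : H = setT by [].
have Kall : forall g, H (f g).
  move=> g; have : @G_op G g by rewrite HG.
  move=> /(_ (f @^-1` H)); apply; split; last split.
  - split; first by rewrite /= f0; case: Hsub.
    by move=> a b Ha Hb; rewrite /= fB; apply: Hd.
  - by apply: open_comp => // y _; apply: fc.
  - move=> n n0; apply/seteqP; split.
      move=> _ [y Ky <-]; split; last by exists y.
      by rewrite /= fMn; apply: dclMn.
    move=> y [Ky [g1 _ gy]].
    have : (H `&` nmul n setT) (f y).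
      by split => //; exists (f g1) => //; rewrite -fMn gy.
    rewrite -Hpure // => -[h Hh hy].
    have e : (f g1 - h) *+ n = 0 by rewrite mulrnBl -fMn gy hy subrr.
    have := tfGs _ _ n0 e; move/eqP; rewrite subr_eq0 => /eqP fgh.
    by exists g1 => //; rewrite /= fgh.
have Hdiv : divisible_set H.
  move=> y n n0 Hy.
  have : (H `&` nmul n setT) y.
    by split => //; have [z _ zy] := divGs y n n0 I; exists z.
  by rewrite -Hpure // => -[h Hh hy]; exists h.
by apply: Hmin => // _ [g _ <-]; apply: Kall.
Qed.
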